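(* Let $A\in\mathbb{H}^{m\times n}$ have full column rank, let $p\ge2$ be an integer, $\alpha\in(0,2/\|A\|_2^2)$, $X_0=\alpha A^H$, and $X_{k+1}=\sum_{i=0}^{p-1}F_k^{\,i}X_k$ where $F_k=I_n-X_kA$. Then $\|F_k\|_2\le\|F_0\|_2^{\,p^k}\to0$, hence $X_kA\to I_n$; moreover $AX_k\to P=AA^\dagger$; and $(X_k)$ converges in operator norm to $A^\dagger$.
   Context: $\mathbb{H}$ denotes the real quaternions; $X^H=\overline{X}^\top$ is the quaternionic conjugate transpose; $\|\cdot\|_2$ is the operator norm induced by the Euclidean norm $\|x\|_2=\sqrt{\mathrm{Re}\,x^Hx}$. $A^\dagger$ is the Moore–Penrose pseudoinverse: the unique $A^\dagger\in\mathbb{H}^{n\times m}$ with $AA^\dagger A=A$, $A^\dagger AA^\dagger=A^\dagger$, $(AA^\dagger)^H=AA^\dagger$, $(A^\dagger A)^H=A^\dagger A$. All products are quaternionic matrix products in the written order. *)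

(* Defs.v *)
From HB Require Import structures.
From mathcomp Require Import all_boot all_order all_algebra.
From mathcomp Require Import all_classical all_reals all_analysis.
From mathcomp Require Import ring.
Set Implicit Arguments. Unset Strict Implicit. Unset Printing Implicit Defensive.
Import Order.TTheory GRing.Theory Num.Theory.
Local Open Scope ring_scope.
Local Open Scope classical_set_scope.

Section Quaternions.
Variable R : realType.

Record quat := Quat { qr : R; qi : R; qj : R; qk : R }.

Definition quat_to (q : quat) := (qr q, qi q, qj q, qk q).
Definition quat_of (t : R * R * R * R) := let: (a, b, c, d) := t in Quat a b c d.
Lemma quat_toK : cancel quat_to quat_of. Proof. by case. Qed.
HB.instance Definition _ := Choice.copy quat (can_type quat_toK).

Definition qzero := Quat 0 0 0 0.
Definition qopp (q : quat) := Quat (- qr q) (- qi q) (- qj q) (- qk q).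
Definition qadd (p q : quat) :=
  Quat (qr p + qr q) (qi p + qi q) (qj p + qj q) (qk p + qk q).

Lemma qaddA : associative qadd.
Proof. by move=> [? ? ? ?] [? ? ? ?] [? ? ? ?]; rewrite /qadd /=; congr Quat; ring. Qed.
Lemma qaddC : commutative qadd.
Proof. by move=> [? ? ? ?] [? ? ? ?]; rewrite /qadd /=; congr Quat; ring. Qed.
Lemma qadd0 : left_id qzero qadd.
Proof. by move=> [? ? ? ?]; rewrite /qadd /=; congr Quat; ring. Qed.
Lemma qaddN : left_inverse qzero qopp qadd.
Proof. by move=> [? ? ? ?]; rewrite /qadd /=; congr Quat; ring. Qed.

HB.instance Definition _ := GRing.isZmodule.Build quat qaddA qaddC qadd0 qaddN.

Definition qone := Quat 1 0 0 0.
(** Hamilton product: i^2 = j^2 = k^2 = ijk = -1. *)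
Definition qmul (p q : quat) :=
  Quat (qr p * qr q - qi p * qi q - qj p * qj q - qk p * qk q)
       (qr p * qi q + qi p * qr q + qj p * qk q - qk p * qj q)
       (qr p * qj q - qi p * qk q + qj p * qr q + qk p * qi q)
       (qr p * qk q + qi p * qj q - qj p * qi q + qk p * qr q).

Lemma qmulA : associative qmul.
Proof. by move=> [? ? ? ?] [? ? ? ?] [? ? ? ?]; rewrite /qmul /=; congr Quat; ring. Qed.
Lemma qmul1 : left_id qone qmul.
Proof. by move=> [? ? ? ?]; rewrite /qmul /=; congr Quat; ring. Qed.
Lemma qmulr1 : right_id qone qmul.
Proof. by move=> [? ? ? ?]; rewrite /qmul /=; congr Quat; ring. Qed.
Lemma qmulDl : left_distributive qmul qadd.
Proof. by move=> [? ? ? ?] [? ? ? ?] [? ? ? ?]; rewrite /qmul /qadd /=; congr Quat; ring. Qed.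
Lemma qmulDr : right_distributive qmul qadd.
Proof. by move=> [? ? ? ?] [? ? ? ?] [? ? ? ?]; rewrite /qmul /qadd /=; congr Quat; ring. Qed.
Lemma qone_neq0 : qone != qzero.
Proof. by apply/eqP => -[] /eqP; rewrite oner_eq0. Qed.

HB.instance Definition _ :=
  GRing.Zmodule_isNzRing.Build quat qmulA qmul1 qmulr1 qmulDl qmulDr qone_neq0.

Definition qconj (q : quat) := Quat (qr q) (- qi q) (- qj q) (- qk q).
Definition qofR (r : R) : quat := Quat r 0 0 0.

Definition hconj m n (X : 'M[quat]_(m, n)) : 'M[quat]_(n, m) := (map_mx qconj X)^T.

Definition vnorm n (x : 'cV[quat]_n) : R := Num.sqrt (qr ((hconj x *m x) 0 0)).

Definition opnorm m n (X : 'M[quat]_(m, n)) : R :=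
  sup [set vnorm (X *m x) / vnorm x | x in [set x : 'cV[quat]_n | x != 0]].

(** Full column rank: the columns are (right-)linearly independent. *)
Definition full_col_rank m n (A : 'M[quat]_(m, n)) : Prop :=
  forall x : 'cV[quat]_n, A *m x = 0 -> x = 0.

Definition is_pinv m n (A : 'M[quat]_(m, n)) (Ad : 'M[quat]_(n, m)) : Prop :=
  [/\ A *m Ad *m A = A, Ad *m A *m Ad = Ad,
      hconj (A *m Ad) = A *m Ad & hconj (Ad *m A) = Ad *m A].

Fixpoint nsX m n (A : 'M[quat]_(m, n)) (alpha : R) (p : nat) (k : nat)
  : 'M[quat]_(n, m) :=
  match k with
  | 0 => map_mx (fun q => qofR alpha * q) (hconj A)
  | k'.+1 => let Xk := nsX A alpha p k' in
             \sum_(i < p) ((1%:M - Xk *m A) ^+ i) *m Xk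
  end.

Definition nsF m n (A : 'M[quat]_(m, n)) (alpha : R) (p k : nat) : 'M[quat]_n :=
  1%:M - nsX A alpha p k *m A.

End Quaternions.

(* Main.v *)
Require Import Defs.
From HB Require Import structures.
From mathcomp Require Import all_boot all_order all_algebra.
From mathcomp Require Import all_classical all_reals all_analysis.
From mathcomp Require Import ring lra.
Import Order.TTheory GRing.Theory Num.Theory.
Import numFieldNormedType.Exports.
Local Open Scope classical_set_scope.
Local Open Scope ring_scope.
Set Implicit Arguments. Unset Strict Implicit. Unset Printing Implicit Defensive.
Section Q.
Variable R : realType.
Local Notation H := (quat R).

Lemma qrD (a b : H) : qr (a + b) = qr a + qr b. Proof. by []. Qed.
Lemma qiD (a b : H) : qi (a + b) = qi a + qi b. Proof. by []. Qed.
Lemma qjD (a b : H) : qj (a + b) = qj a + qj b. Proof. by []. Qed.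
Lemma qkD (a b : H) : qk (a + b) = qk a + qk b. Proof. by []. Qed.
Lemma qr0 : qr (0 : H) = 0. Proof. by []. Qed.
Lemma qi0 : qi (0 : H) = 0. Proof. by []. Qed.
Lemma qj0 : qj (0 : H) = 0. Proof. by []. Qed.
Lemma qk0 : qk (0 : H) = 0. Proof. by []. Qed.

Lemma qr_sum I (r : seq I) P (F : I -> H) : qr (\sum_(i <- r | P i) F i) = \sum_(i <- r | P i) qr (F i).
Proof. exact: (big_morph _ qrD qr0). Qed.
Lemma qi_sum I (r : seq I) P (F : I -> H) : qi (\sum_(i <- r | P i) F i) = \sum_(i <- r | P i) qi (F i).
Proof. exact: (big_morph _ qiD qi0). Qed.
Lemma qj_sum I (r : seq I) P (F : I -> H) : qj (\sum_(i <- r | P i) F i) = \sum_(i <- r | P i) qj (F i).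
Proof. exact: (big_morph _ qjD qj0). Qed.
Lemma qk_sum I (r : seq I) P (F : I -> H) : qk (\sum_(i <- r | P i) F i) = \sum_(i <- r | P i) qk (F i).
Proof. exact: (big_morph _ qkD qk0). Qed.

Lemma qconjD (a b : H) : qconj (a + b) = qconj a + qconj b.
Proof. by case: a b => ? ? ? ? [? ? ? ?]; rewrite /qconj; congr Quat => /=; ring. Qed.
Lemma qconj0 : qconj (0 : H) = 0.
Proof. by rewrite /qconj; congr Quat => /=; rewrite oppr0. Qed.
Lemma qconj_sum I (r : seq I) P (F : I -> H) : qconj (\sum_(i <- r | P i) F i) = \sum_(i <- r | P i) qconj (F i).
Proof. exact: (big_morph _ qconjD qconj0). Qed.
Lemma qconjM (a b : H) : qconj (a * b) = qconj b * qconj a.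
Proof. by case: a b => ? ? ? ? [? ? ? ?]; rewrite /qconj; congr Quat => /=; ring. Qed.

Definition dot (a b : H) := qr a * qr b + qi a * qi b + qj a * qj b + qk a * qk b.
Lemma qr_conjM (a b : H) : qr (qconj a * b) = dot a b.
Proof. by case: a b => ? ? ? ? [? ? ? ?]; rewrite /dot /=; ring. Qed.
Lemma dotC a b : dot a b = dot b a. Proof. rewrite /dot; ring. Qed.
Lemma dotDl a b c : dot (a + b) c = dot a c + dot b c. Proof. rewrite /dot !(qrD,qiD,qjD,qkD); ring. Qed.
Lemma dotNl a c : dot (- a) c = - dot a c.
Proof. by case: a => ? ? ? ?; rewrite /dot /=; ring. Qed.
Lemma dotZl r a c : dot (qofR r * a) c = r * dot a c.
Proof. by case: a c => ? ? ? ? [? ? ? ?]; rewrite /dot /=; ring. Qed.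
Lemma dot_ge0 a : 0 <= dot a a.
Proof. rewrite /dot -!expr2; by rewrite !addr_ge0 ?sqr_ge0. Qed.
Lemma dotM a b : dot (a * b) (a * b) = dot a a * dot b b.
Proof. by case: a b => ? ? ? ? [? ? ? ?]; rewrite /dot /=; ring. Qed.
Lemma qofR_comm r (a : H) : qofR r * a = a * qofR r.
Proof. by case: a => ? ? ? ?; rewrite /qofR /=; congr Quat => /=; ring. Qed.
End Q.
Section M.
Variable R : realType.
Local Notation H := (quat R).

Definition ip n (u v : 'cV[H]_n) : R := \sum_i dot (u i 0) (v i 0).

Lemma ipE n (u v : 'cV[H]_n) : qr ((hconj u *m v) 0 0) = ip u v.
Proof. rewrite mxE qr_sum; apply eq_bigr => k _; by rewrite /hconj !mxE qr_conjM. Qed.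
Lemma vnormE n (u : 'cV[H]_n) : vnorm u = Num.sqrt (ip u u).
Proof. by rewrite /vnorm ipE. Qed.
Lemma ipC n (u v : 'cV[H]_n) : ip u v = ip v u.
Proof. by apply eq_bigr => i _; rewrite dotC. Qed.
Lemma ip_ge0 n (u : 'cV[H]_n) : 0 <= ip u u.
Proof. by apply: sumr_ge0 => i _; apply: dot_ge0. Qed.
Lemma ipDl n (u v w : 'cV[H]_n) : ip (u + v) w = ip u w + ip v w.
Proof. rewrite /ip -big_split; apply eq_bigr => i _; by rewrite mxE dotDl. Qed.
Lemma ipNl n (u w : 'cV[H]_n) : ip (- u) w = - ip u w.
Proof. rewrite /ip -sumrN; apply eq_bigr => i _; by rewrite mxE dotNl. Qed.
Lemma ipZl n r (u w : 'cV[H]_n) : ip (qofR r *: u) w = r * ip u w.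
Proof. rewrite /ip mulr_sumr; apply eq_bigr => i _; by rewrite mxE dotZl. Qed.
Lemma ipBl n (u v w : 'cV[H]_n) : ip (u - v) w = ip u w - ip v w.
Proof. by rewrite ipDl ipNl. Qed.
Lemma ipDr n (u v w : 'cV[H]_n) : ip w (u + v) = ip w u + ip w v.
Proof. by rewrite ipC ipDl ![ip _ w]ipC. Qed.
Lemma ipBr n (u v w : 'cV[H]_n) : ip w (u - v) = ip w u - ip w v.
Proof. by rewrite ipC ipBl ![ip _ w]ipC. Qed.
Lemma ipZr n r (u w : 'cV[H]_n) : ip w (qofR r *: u) = r * ip w u.
Proof. by rewrite ipC ipZl ipC. Qed.

Lemma hconj_mul m n p (M : 'M[H]_(m, n)) (N : 'M[H]_(n, p)) :
  hconj (M *m N) = hconj N *m hconj M.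
Proof.
apply/matrixP => i j; rewrite /hconj !mxE qconj_sum; apply eq_bigr => k _.
by rewrite !mxE qconjM.
Qed.

Lemma ip_adj m n (M : 'M[H]_(m, n)) x y : ip x (hconj M *m y) = ip (M *m x) y.
Proof. by rewrite -!ipE hconj_mul mulmxA. Qed.

Lemma vnorm0 n : vnorm (0 : 'cV[H]_n) = 0.
Proof.
rewrite vnormE /ip big1 ?sqrtr0 // => i _; rewrite mxE /dot /=.
rewrite /qr /=. ring.
Qed.
End M.
Section B.
Variable R : realType.
Local Notation H := (quat R).

Lemma term_le (I : finType) (F : I -> R) i : (forall j, 0 <= F j) -> F i <= \sum_j F j.
Proof. move=> h; rewrite (bigD1 i) //= lerDl; exact: sumr_ge0. Qed.

Lemma sq_sum_le N (F : 'I_N -> R) : (\sum_j F j) ^+ 2 <= N%:R ^+ 2 * \sum_j F j ^+ 2.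
Proof.
set S := \sum_j F j ^+ 2.
have S0 : 0 <= S by apply: sumr_ge0 => j _; exact: sqr_ge0.
have hj : forall j, `|F j| <= Num.sqrt S.
  move=> j; rewrite -sqrtr_sqr ler_sqrt //; apply: term_le => k; exact: sqr_ge0.
have h1 : `|\sum_j F j| <= N%:R * Num.sqrt S.
  apply: le_trans; first exact: ler_norm_sum.
  apply: le_trans; first by apply: ler_sum => j _; exact: hj j.
  by rewrite sumr_const card_ord mulr_natl.
rewrite -(real_normK (num_real _)).
have h0 : 0 <= `|\sum_j F j| by [].
have := sqr_sqrtr S0.
have : 0 <= Num.sqrt S by [].
move: h1 h0; set a := `|_|; set s := Num.sqrt S; set NN := N%:R.
have : 0 <= NN by rewrite /NN ler0n.
move=> *; nra.
Qed.
End B.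
Section C.
Variable R : realType.
Local Notation H := (quat R).

Lemma dot_sum_le N (y : 'I_N -> H) :
  dot (\sum_j y j) (\sum_j y j) <= N%:R ^+ 2 * \sum_j dot (y j) (y j).
Proof.
rewrite /dot qr_sum qi_sum qj_sum qk_sum -!expr2.
have -> : \sum_j (qr (y j) * qr (y j) + qi (y j) * qi (y j) + qj (y j) * qj (y j) + qk (y j) * qk (y j))
  = \sum_j qr (y j) ^+ 2 + \sum_j qi (y j) ^+ 2 + \sum_j qj (y j) ^+ 2 + \sum_j qk (y j) ^+ 2.
  by rewrite -!big_split /=; apply eq_bigr => j _; rewrite -!expr2.
by rewrite !mulrDr; repeat apply: lerD; apply: sq_sum_le.
Qed.

Lemma mx_bound m n (M : 'M[H]_(m, n)) :
  exists C, 0 <= C /\ forall x, ip (M *m x) (M *m x) <= C * ip x x.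
Proof.
set K := \sum_i \sum_j dot (M i j) (M i j).
have K0 : forall i j, dot (M i j) (M i j) <= K.
  move=> i j; apply: le_trans (term_le _ _ ) ; last first.
    by move=> i'; apply: sumr_ge0 => j' _; exact: dot_ge0.
  by apply: term_le => j'; exact: dot_ge0.
exists (\sum_(i < m) (n%:R ^+ 2 * K)); split.
  apply: sumr_ge0 => i _; apply: mulr_ge0; first exact: sqr_ge0.
  by apply: sumr_ge0 => i' _; apply: sumr_ge0 => j' _; exact: dot_ge0.
move=> x; rewrite mulr_suml /ip; apply: ler_sum => i _.
rewrite mxE; apply: le_trans; first exact: dot_sum_le.
rewrite -[_ * K * _]mulrA; apply: ler_wpM2l; first exact: sqr_ge0.
rewrite mulr_sumr; apply: ler_sum => j _; rewrite dotM.
by apply: ler_wpM2r; [exact: dot_ge0 | exact: K0].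
Qed.
End C.
Section O.
Variable R : realType.
Local Notation H := (quat R).

Lemma vnorm_ge0 n (x : 'cV[H]_n) : 0 <= vnorm x.
Proof. by rewrite vnormE sqrtr_ge0. Qed.

Lemma vnorm_bound m n (M : 'M[H]_(m, n)) :
  exists C, 0 <= C /\ forall x, vnorm (M *m x) <= C * vnorm x.
Proof.
have [C [C0 hC]] := mx_bound M.
exists (Num.sqrt C); split; first exact: sqrtr_ge0.
move=> x; rewrite !vnormE -sqrtrM //; rewrite ler_sqrt //; last exact: mulr_ge0 (ip_ge0 _).
Qed.

Definition oset m n (M : 'M[H]_(m, n)) :=
  [set vnorm (M *m x) / vnorm x | x in [set x : 'cV[H]_n | x != 0]].

Lemma oset_ub m n (M : 'M[H]_(m, n)) b :
  0 <= b -> (forall x, vnorm (M *m x) <= b * vnorm x) -> ubound (oset M) b.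
Proof.
move=> b0 hb y [x _ <-].
have [v0|vp] := eqVneq (vnorm x) 0.
  by rewrite v0 invr0 mulr0.
have vpos : 0 < vnorm x by rewrite lt_def vp vnorm_ge0.
by rewrite ler_pdivrMr.
Qed.

Lemma oset_has_ub m n (M : 'M[H]_(m, n)) : has_ubound (oset M).
Proof. have [C [C0 hC]] := vnorm_bound M; exists C; exact: oset_ub. Qed.

Lemma opnorm_le m n (M : 'M[H]_(m, n)) b :
  0 <= b -> (forall x, vnorm (M *m x) <= b * vnorm x) -> opnorm M <= b.
Proof.
move=> b0 hb; rewrite /opnorm -/(oset M).
have [[y Ey]|ne] := pselect (oset M !=set0).
  by apply: ge_sup; [exists y | exact: oset_ub].
have -> : oset M = set0.
  by apply/seteqP; split => y //= Ey; apply: ne; exists y.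
by rewrite sup0.
Qed.

Lemma opnorm_ge0 m n (M : 'M[H]_(m, n)) : 0 <= opnorm M.
Proof.
rewrite /opnorm -/(oset M).
have [[y Ey]|ne] := pselect (oset M !=set0).
  apply: le_trans (ub_le_sup (oset_has_ub M) Ey).
  by case: Ey => x _ <-; apply: divr_ge0; exact: vnorm_ge0.
have -> : oset M = set0.
  by apply/seteqP; split => y //= Ey; apply: ne; exists y.
by rewrite sup0.
Qed.

Lemma opnormP m n (M : 'M[H]_(m, n)) x : vnorm (M *m x) <= opnorm M * vnorm x.
Proof.
have [C [C0 hC]] := vnorm_bound M.
have [v0|vp] := eqVneq (vnorm x) 0.
  by have := hC x; rewrite v0 !mulr0.
have vpos : 0 < vnorm x by rewrite lt_def vp vnorm_ge0.
rewrite -ler_pdivrMr //.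
apply: (ub_le_sup (oset_has_ub M)); exists x => //=.
by apply/eqP => x0; move: vp; rewrite x0 vnorm0 eqxx.
Qed.

Lemma opnorm_mul m n p (M : 'M[H]_(m, n)) (N : 'M[H]_(n, p)) :
  opnorm (M *m N) <= opnorm M * opnorm N.
Proof.
apply: opnorm_le; first by apply: mulr_ge0; exact: opnorm_ge0.
move=> x; rewrite -mulmxA; apply: le_trans (opnormP _ _) _.
by rewrite -mulrA; apply: ler_wpM2l; [exact: opnorm_ge0 | exact: opnormP].
Qed.

Lemma vnormN n (x : 'cV[H]_n) : vnorm (- x) = vnorm x.
Proof. by rewrite !vnormE ipNl ipC ipNl opprK. Qed.

Lemma opnormN m n (M : 'M[H]_(m, n)) : opnorm (- M) = opnorm M.
Proof.
apply/le_anti/andP; split; apply: opnorm_le; try exact: opnorm_ge0.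
  by move=> x; rewrite mulNmx vnormN; exact: opnormP.
by move=> x; rewrite -vnormN -mulNmx; exact: opnormP.
Qed.

Lemma opnorm1 n : opnorm (1%:M : 'M[H]_n) <= 1.
Proof. by apply: opnorm_le => // x; rewrite mul1mx mul1r. Qed.

Lemma opnormX n (M : 'M[H]_n) k : opnorm (M ^+ k) <= opnorm M ^+ k.
Proof.
elim: k => [|k IH]; first by rewrite !expr0 -idmxE; exact: opnorm1.
rewrite !exprS -mulmxE; apply: le_trans (opnorm_mul _ _) _.
by apply: ler_wpM2l; [exact: opnorm_ge0 | exact: IH].
Qed.
End O.
Lemma geom_tele (T : pzRingType) (x : T) p :
  \sum_(i < p) x ^+ i * (1 - x) = 1 - x ^+ p.
Proof.
elim: p => [|p IH]; first by rewrite big_ord0 expr0 subrr.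
rewrite big_ord_recr /= IH mulrBr mulr1 -exprSr.
by rewrite addrA subrK.
Qed.

Section Alg.
Variable R : realType.
Local Notation H := (quat R).
Variables (m n : nat) (A : 'M[H]_(m, n)) (Ad : 'M[H]_(n, m)) (alpha : R) (p : nat).

Lemma nsX_succ k : nsX A alpha p k.+1 =
  \sum_(i < p) ((1%:M - nsX A alpha p k *m A) ^+ i) *m nsX A alpha p k.
Proof. by []. Qed.

Lemma nsF_succ k : nsF A alpha p k.+1 = nsF A alpha p k ^+ p.
Proof.
rewrite /nsF nsX_succ. 
set X := nsX A alpha p k.
set F := 1%:M - X *m A.
have XA : X *m A = 1%:M - F by rewrite /F opprB addrC subrK.
rewrite mulmx_suml.
under eq_bigr => i _ do rewrite -mulmxA XA.
by rewrite idmxE mulmxE geom_tele opprB addrC subrK.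
Qed.
Lemma nsX0 : nsX A alpha p 0 = map_mx (fun q => qofR alpha * q) (hconj A).
Proof. by []. Qed.

Lemma X0E : nsX A alpha p 0 = qofR alpha *: hconj A.
Proof. rewrite nsX0; apply/matrixP => i j; by rewrite mxE [RHS]mxE. Qed.

Lemma X_AAd k : is_pinv A Ad -> nsX A alpha p k *m A *m Ad = nsX A alpha p k.
Proof.
case=> h1 h2 h3 h4; elim: k => [|k IH].
  by rewrite X0E -!scalemxAl -mulmxA -h3 -hconj_mul h1.
rewrite nsX_succ !mulmx_suml; apply eq_bigr => i _.
by rewrite -!mulmxA (mulmxA (nsX A alpha p k)) IH.
Qed.
End Alg.
Section Key.
Variable R : realType.
Local Notation H := (quat R).

Lemma opnormP2 m n (M : 'M[H]_(m, n)) x : ip (M *m x) (M *m x) <= opnorm M ^+ 2 * ip x x.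
Proof.
have := opnormP M x; rewrite !vnormE => h.
have h0 : 0 <= Num.sqrt (ip (M *m x) (M *m x)) by [].
have h2 : 0 <= opnorm M by exact: opnorm_ge0.
rewrite -(sqr_sqrtr (ip_ge0 (M *m x))) -(sqr_sqrtr (ip_ge0 x)) -exprMn.
by rewrite lerXn2r // ?nnegrE // mulr_ge0.
Qed.

Variables (m n : nat) (A : 'M[H]_(m, n)) (Ad : 'M[H]_(n, m)) (alpha : R) (p : nat).

Lemma left_inv (x : 'cV[H]_n) : full_col_rank A -> is_pinv A Ad -> Ad *m (A *m x) = x.
Proof.
move=> hf [h1 _ _ _]; apply/eqP; rewrite -subr_eq0; apply/eqP/hf.
by rewrite mulmxBr !mulmxA h1 subrr.
Qed.

Lemma F0_lt1 : full_col_rank A -> is_pinv A Ad -> 0 < alpha ->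
  alpha < 2 / opnorm A ^+ 2 -> opnorm (nsF A alpha p 0) < 1.
Proof.
move=> hf hp a0 ha.
set s := opnorm A ^+ 2.
have s0 : 0 < s.
  have : 0 <= s by rewrite /s exprn_ge0 // opnorm_ge0.
  rewrite le0r => /orP [/eqP s0|//].
  by move: ha; rewrite -/s s0 invr0 mulr0 => /(lt_trans a0); rewrite ltxx.
have as2 : alpha * s < 2 by rewrite -ltr_pdivlMr // -/s.
set d := opnorm Ad.
set c := alpha * (2 - alpha * s).
have c0 : 0 < c by rewrite /c mulr_gt0 // subr_gt0.
have d2 : 0 <= d ^+ 2 by exact: sqr_ge0.
set r := d ^+ 2 / (c + d ^+ 2).
have cd0 : 0 < c + d ^+ 2 by exact: ltr_wpDr.
have r0 : 0 <= r by rewrite /r divr_ge0 // ltW.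
have r1 : r < 1 by rewrite /r ltr_pdivrMr // mul1r ltrDr.
apply: (@le_lt_trans _ _ (Num.sqrt r)); last first.
  by rewrite -sqrtr1 ltr_sqrt.
apply: opnorm_le; first exact: sqrtr_ge0.
move=> x.
set y := A *m x.
set w := hconj A *m y.
have Fx : nsF A alpha p 0 *m x = x - qofR alpha *: w.
  by rewrite /nsF mulmxBl mul1mx X0E -!scalemxAl -mulmxA.
set a := ip x x.
set t := ip y y.
set W := ip w w.
have E : ip (nsF A alpha p 0 *m x) (nsF A alpha p 0 *m x) = a - 2 * alpha * t + alpha ^+ 2 * W.
  rewrite Fx !ipBl !ipBr !ipZl !ipZr /w ip_adj -/y -/t -/w (ipC w x) /w ip_adj -/y -/t -/w.
  rewrite -/a -/W; ring.
set b := ip (A *m w) y.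
have Wb : W = b by rewrite /W {1}/w ipC ip_adj.
have t0 : 0 <= t by exact: ip_ge0.
have a0' : 0 <= a by exact: ip_ge0.
have W0 : 0 <= W by exact: ip_ge0.
have Ws : W <= s * t.
  have h := ip_ge0 (A *m w - qofR s *: y).
  rewrite !ipBl !ipBr !ipZl !ipZr -/b -/t (ipC y (A *m w)) -/b in h.
  have h2 := opnormP2 A w; rewrite -/s -/W in h2.
  rewrite -Wb in h.
  have : s * W <= s * (s * t) by nra.
  by rewrite ler_pM2l.
have adt : a <= d ^+ 2 * t.
  by have := opnormP2 Ad y; rewrite /y left_inv.
have E2 : ip (nsF A alpha p 0 *m x) (nsF A alpha p 0 *m x) <= r * a.
  rewrite E /r [X in _ <= X]mulrAC ler_pdivlMr //.
  have aW : alpha ^+ 2 * W <= alpha ^+ 2 * (s * t) by rewrite ler_wpM2l // sqr_ge0.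
  have ct : 0 <= c * t by rewrite mulr_ge0 // ltW.
  rewrite /c in ct c0 *.
  nra.
rewrite !vnormE -sqrtrM //; rewrite ler_sqrt //; exact: mulr_ge0.
Qed.
End Key.
Theorem mainTheorem6 (R : realType) (m n : nat) (A : 'M[quat R]_(m, n))
    (Ad : 'M[quat R]_(n, m)) (p : nat) (alpha : R) :
  full_col_rank A -> is_pinv A Ad -> (2 <= p)%N ->
  0 < alpha -> alpha < 2 / opnorm A ^+ 2 ->
  (forall k : nat, opnorm (nsF A alpha p k) <= opnorm (nsF A alpha p 0) ^+ (p ^ k)%N) /\
  ((fun k : nat => opnorm (nsF A alpha p 0) ^+ (p ^ k)%N) @ \oo --> (0 : R)) /\
  ((fun k : nat => opnorm (nsX A alpha p k *m A - 1%:M)) @ \oo --> (0 : R)) /\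
  ((fun k : nat => opnorm (A *m nsX A alpha p k - A *m Ad)) @ \oo --> (0 : R)) /\
  ((fun k : nat => opnorm (nsX A alpha p k - Ad)) @ \oo --> (0 : R)).
Proof.
move=> hf hp p2 a0 ha.
have q1 := F0_lt1 p hf hp a0 ha.
have [q qE] : exists q, opnorm (nsF A alpha p 0) = q by eexists.
rewrite qE in q1 *.
have q0 : 0 <= q by rewrite -qE; exact: opnorm_ge0.
have P1 : forall k : nat, opnorm (nsF A alpha p k) <= q ^+ (p ^ k)%N.
  elim=> [|k IH]; first by rewrite expn0 expr1 qE; exact: lexx.
  rewrite nsF_succ; apply: le_trans (opnormX _ _) _.
  rewrite expnSr (exprM q (p ^ k)%N p) lerXn2r ?nnegrE; first [exact: isT | exact: IH | exact: opnorm_ge0 | exact: exprn_ge0].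
have P2 : (fun k : nat => q ^+ (p ^ k)%N) @ \oo --> (0 : R).
  apply: (@squeeze_cvgr _ _ _ _ (fun _ => 0) (fun k => q ^+ k)).
  - apply: nearW => k; rewrite exprn_ge0 //=.
    apply: ler_wiXn2l => //; first exact: ltW.
    by apply: ltnW; apply: ltn_expl.
  - exact: cvg_cst.
  - by apply: cvg_expr; rewrite ger0_norm.
have bnd : forall (g : nat -> R) C, 0 <= C -> (forall k, 0 <= g k) ->
    (forall k, g k <= C * q ^+ (p ^ k)%N) -> g @ \oo --> (0 : R).
  move=> g C C0 g0 hg.
  apply: (@squeeze_cvgr _ _ _ _ (fun _ => 0) (fun k => C * q ^+ (p ^ k)%N)).
  - by apply: nearW => k; rewrite g0 hg.
  - exact: cvg_cst.
  - have h := @cvgMr _ _ _ _ _ C _ P2; rewrite mulr0 in h; exact: h.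
have XA k : nsX A alpha p k *m A - 1%:M = - nsF A alpha p k by rewrite /nsF opprB.
have XAd k : nsX A alpha p k - Ad = - nsF A alpha p k *m Ad.
  by rewrite -XA mulmxBl mul1mx X_AAd.
have P5 : forall k, opnorm (nsX A alpha p k - Ad) <= opnorm Ad * q ^+ (p ^ k)%N.
  move=> k; rewrite XAd; apply: le_trans (opnorm_mul _ _) _.
  rewrite opnormN mulrC; apply: ler_wpM2l; [exact: opnorm_ge0 | exact: P1].
split; first exact: P1.
split; first exact: P2.
split.
  apply: (bnd _ 1) => // k; first exact: opnorm_ge0.
  by rewrite XA opnormN mul1r.
split.
  apply: (bnd _ (opnorm A * opnorm Ad)) => [|k|k].
  - by apply: mulr_ge0; exact: opnorm_ge0.
  - exact: opnorm_ge0.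
  - rewrite -mulmxBr; apply: le_trans (opnorm_mul _ _) _.
    rewrite -mulrA; apply: ler_wpM2l; [exact: opnorm_ge0 | exact: P5].
apply: (bnd _ (opnorm Ad)) => [|k|k]; [exact: opnorm_ge0 | exact: opnorm_ge0 | exact: P5].
Qed.
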